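(* Let $n \ge 3$ and let $S \subseteq \{1,\dots,n\}$ with $|S| = 3$. Then there exist $u \in \mathbb{R}^4$, $W \in \mathbb{R}^{4 \times n}$ and $b \in \mathbb{R}^4$ such that the network $f(x) = u^\intercal \sigma(Wx + b)$ satisfies, for every $x \in \{\pm 1\}^n$, $f(x) > 0$ if $\prod_{i \in S} x_i = 1$ and $f(x) < 0$ if $\prod_{i \in S} x_i = -1$.
   Context: Here $\sigma$ is the ReLU function $\sigma(z) = \max(0,z)$, applied componentwise. A 1-layer ReLU net with $p$ hidden neurons is a function $f(x) = u^\intercal \sigma(Wx+b)$ with $u \in \mathbb{R}^p$, $W \in \mathbb{R}^{p\times n}$, $b \in \mathbb{R}^p$; it computes the $(n,3)$-parity with hidden index set $S$ if its output is positive exactly when $\prod_{i\in S} x_i = 1$ and negative otherwise. *)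

(* Defs.v *)
From mathcomp Require Import all_boot all_order all_algebra.
From mathcomp Require Import reals.
Set Implicit Arguments. Unset Strict Implicit. Unset Printing Implicit Defensive.
Import Order.TTheory GRing.Theory Num.Theory.
Local Open Scope ring_scope.

Definition relu (R : realType) (z : R) : R := Num.max 0 z.
Definition relu_vec (R : realType) (p : nat) (v : 'cV[R]_p) : 'cV[R]_p :=
  \col_i relu (v i 0).

Definition relu_net (R : realType) (p n : nat) (u : 'cV[R]_p) (W : 'M[R]_(p, n))
  (b : 'cV[R]_p) (x : 'cV[R]_n) : R :=
  (u^T *m relu_vec (W *m x + b)) 0 0.

Definition is_pm1 (R : realType) (n : nat) (x : 'cV[R]_n) : Prop :=
  forall i, x i 0 = 1 \/ x i 0 = -1.

Definition parity (R : realType) (n : nat) (S : {set 'I_n}) (x : 'cV[R]_n) : R :=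
  \prod_(i in S) x i 0.

(* Main.v *)
Require Import Defs.
From mathcomp Require Import all_boot all_order all_algebra.
From mathcomp Require Import reals.
From mathcomp Require Import lra.
Set Implicit Arguments. Unset Strict Implicit.
Import Order.TTheory GRing.Theory Num.Theory.
Local Open Scope ring_scope.

Lemma relu_pos (R : realType) (z : R) : 0 <= z -> relu z = z.
Proof. by move=> h; rewrite /relu max_r. Qed.
Lemma relu_neg (R : realType) (z : R) : z <= 0 -> relu z = 0.
Proof. by move=> h; rewrite /relu max_l. Qed.

Definition F (R : realType) (s : R) : R :=
  -1 * relu (s + 4) + 4 * relu (s + 2) + (-8) * relu (s + 0) + 12 * relu (s + -2).

Lemma F_m3 (R : realType) : F (-3 : R) < 0.
Proof.
rewrite /F (relu_pos (_ : 0 <= -3 + 4)) ?(relu_neg (_ : -3 + 2 <= 0))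
  ?(relu_neg (_ : -3 + 0 <= 0)) ?(relu_neg (_ : -3 + -2 <= 0)); lra.
Qed.
Lemma F_m1 (R : realType) : 0 < F (-1 : R).
Proof.
rewrite /F (relu_pos (_ : 0 <= -1 + 4)) ?(relu_pos (_ : 0 <= -1 + 2))
  ?(relu_neg (_ : -1 + 0 <= 0)) ?(relu_neg (_ : -1 + -2 <= 0)); lra.
Qed.
Lemma F_1 (R : realType) : F (1 : R) < 0.
Proof.
rewrite /F (relu_pos (_ : 0 <= 1 + 4)) ?(relu_pos (_ : 0 <= 1 + 2))
  ?(relu_pos (_ : 0 <= 1 + 0)) ?(relu_neg (_ : 1 + -2 <= 0)); lra.
Qed.
Lemma F_3 (R : realType) : 0 < F (3 : R).
Proof.
rewrite /F (relu_pos (_ : 0 <= 3 + 4)) ?(relu_pos (_ : 0 <= 3 + 2))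
  ?(relu_pos (_ : 0 <= 3 + 0)) ?(relu_pos (_ : 0 <= 3 + -2)); lra.
Qed.

Theorem proposition3 (R : realType) (n : nat) (S : {set 'I_n}) :
  (3 <= n)%N -> #|S| = 3%N ->
  exists (u : 'cV[R]_4) (W : 'M[R]_(4, n)) (b : 'cV[R]_4),
    forall x : 'cV[R]_n, is_pm1 x ->
      (parity S x = 1 -> 0 < relu_net u W b x) /\
      (parity S x = -1 -> relu_net u W b x < 0).
Proof.
move=> _ hS.
exists (\col_(k < 4) nth 0 [:: -1; 4; -8; 12] k).
exists (\matrix_(k < 4, j < n) (j \in S)%:R).
exists (\col_(k < 4) nth 0 [:: 4; 2; 0; -2] k).
move=> x hx.
have key : relu_net (\col_(k < 4) nth 0 [:: -1; 4; -8; 12] k)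
   (\matrix_(k < 4, j < n) (j \in S)%:R) (\col_(k < 4) nth 0 [:: 4; 2; 0; -2] k) x
   = F (\sum_(i in S) x i 0).
  have hs : forall k : 'I_4, \sum_j (\matrix_(k < 4, j < n) (j \in S)%:R) k j * x j 0
      = \sum_(i in S) x i 0 :> R.
    move=> k; rewrite [RHS]big_mkcond /=; apply: eq_bigr => j _.
    by rewrite mxE; case: (j \in S); rewrite ?mul1r ?mul0r.
  rewrite /relu_net /relu_vec.
  rewrite !mxE big_ord_recr big_ord_recr big_ord_recr big_ord_recr
    big_ord0 /= !mxE !hs /F /= ?add0r.
  by [].
rewrite key /parity.
have /set0Pn [a aS] : S != set0 by rewrite -cards_eq0 hS.
have : #|S :\ a| = 2%N by move: hS; rewrite (cardsD1 a) aS => -[].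
move/eqP/cards2P => [b [c [bc hSa]]].
have aN : a \notin [set b; c] by rewrite -hSa setD11.
have bN : b \notin [set c] by rewrite in_set1.
rewrite -(setD1K aS) hSa !big_setU1 //= !big_set1.
have := hx a; have := hx b; have := hx c.
by move=> [] -> [] -> [] -> ; split => h;
  (try (exfalso; move: h; lra));
  match goal with |- context [F ?s] => 
    first [ have -> : s = 3 by lra | have -> : s = 1 by lra
          | have -> : s = -1 by lra | have -> : s = -3 by lra ] end;
  rewrite ?F_m3 ?F_m1 ?F_1 ?F_3.
Qed.
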